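(* Let $\rho=\mathrm{WC}$ on $L=L^1$, where $\mathrm{WC}(X):=\operatorname{ess\,sup}(-X)$. Then the market admits $\mathrm{WC}$-arbitrage if and only if it admits arbitrage of the first kind, and it admits strong $\mathrm{WC}$-arbitrage if and only if it admits arbitrage of the second kind.
   Context: Let $(\Omega,\mathcal{F},\mathbb{P})$ be a probability space and a market: riskless asset $S^0_0=1$, $S^0_1=1+r$, $r>-1$; risky assets $S^1,\dots,S^d$ with constants $S^i_0>0$ and real-valued $\mathcal{F}$-measurable $S^i_1$; returns $R^i:=(S^i_1-S^i_0)/S^i_0$. Standing assumptions: nonredundancy (if $\theta\in\mathbb{R}^{1+d}$ with $\sum_{i=0}^d\theta^iS^i_t=0$ a.s. for $t\in\{0,1\}$ then $\theta=0$), $R^i\in L^1$, $\mathbb{E}[R^i]\ne r$ for some $i$. Excess return of $\pi\in\mathbb{R}^d$: $X_\pi:=\pi\cdot(R-r\mathbf{1})$. $\pi$ is $\rho$-efficient if $\mathbb{E}[X_\pi]\ge0$ and no $\pi'$ has $\mathbb{E}[X_{\pi'}]\ge\mathbb{E}[X_\pi]$ and $\rho(X_{\pi'})\le\rho(X_\pi)$ with one inequality strict; $\rho$-arbitrage: no $\rho$-efficient portfolio exists; strong $\rho$-arbitrage: for every $\pi$ there is $\pi'$ with $\mathbb{E}[X_{\pi'}]>\mathbb{E}[X_\pi]$ and $\rho(X_{\pi'})<\rho(X_\pi)$. Arbitrage of the first kind: $(\theta^0,\theta)\in\mathbb{R}^{1+d}$ with $\theta^0S^0_0+\theta\cdot S_0\le0$,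 $\theta^0S^0_1+\theta\cdot S_1\ge0$ a.s., $\mathbb{P}[\theta^0S^0_1+\theta\cdot S_1>0]>0$. Arbitrage of the second kind: $(\theta^0,\theta)$ with $\theta^0S^0_0+\theta\cdot S_0<0$ and $\theta^0S^0_1+\theta\cdot S_1\ge0$ a.s. *)

(* Defs.v *)
From HB Require Import structures.
From mathcomp Require Import all_boot all_order all_algebra.
From mathcomp Require Import all_classical all_reals all_analysis.
From mathcomp Require Import ess_sup_inf.
Set Implicit Arguments. Unset Strict Implicit. Unset Printing Implicit Defensive.
Import Order.TTheory GRing.Theory Num.Theory.
Import numFieldNormedType.Exports.
Local Open Scope classical_set_scope.
Local Open Scope ring_scope.

Section Market.
Context {R : realType} {dT : measure_display} {T : measurableType dT}.
Variable (P : probability T R).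
(* one-period market: riskless rate r, n risky assets with initial prices S0 i
   and terminal prices S1 i (random variables) *)
Variables (r : R) (n : nat) (S0 : 'I_n -> R) (S1 : 'I_n -> T -> R).

Definition ret (i : 'I_n) : T -> R := fun w => (S1 i w - S0 i) / S0 i.

Definition excess (pi : 'I_n -> R) : T -> R :=
  fun w => \sum_(i < n) pi i * (ret i w - r).

Definition expect (X : T -> R) : \bar R := (\int[P]_w (X w)%:E)%E.

Definition market_assumptions : Prop :=
  [/\ -1 < r /\ (forall i, 0 < S0 i),
      (forall i, measurable_fun setT (S1 i)),
      (* nonredundancy *)
      (forall (th0 : R) (th : 'I_n -> R),
         th0 * 1 + \sum_(i < n) th i * S0 i = 0 ->
         (\forall w \ae P, th0 * (1 + r) + \sum_(i < n) th i * S1 i w = 0) ->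
         th0 = 0 /\ (forall i, th i = 0)),
      (forall i, P.-integrable setT (fun w => (ret i w)%:E)) &
      (exists i, expect (ret i) != r%:E)].

Definition WC (X : T -> R) : \bar R := ess_sup P (fun w => (- X w)%:E).

Section Rho.
Variable rho : (T -> R) -> \bar R.

Definition rho_efficient (pi : 'I_n -> R) : Prop :=
  (0 <= expect (excess pi))%E /\
  ~ exists pi' : 'I_n -> R,
      [/\ (expect (excess pi) <= expect (excess pi'))%E,
          (rho (excess pi') <= rho (excess pi))%E &
          ((expect (excess pi) < expect (excess pi'))%E \/
           (rho (excess pi') < rho (excess pi))%E)].

Definition rho_arbitrage : Prop := ~ exists pi, rho_efficient pi.

Definition strong_rho_arbitrage : Prop :=
  forall pi : 'I_n -> R, exists pi' : 'I_n -> R,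
    (expect (excess pi) < expect (excess pi'))%E /\
    (rho (excess pi') < rho (excess pi))%E.
End Rho.

Definition value1 (th0 : R) (th : 'I_n -> R) (w : T) : R :=
  th0 * (1 + r) + \sum_(i < n) th i * S1 i w.
Definition value0 (th0 : R) (th : 'I_n -> R) : R :=
  th0 * 1 + \sum_(i < n) th i * S0 i.

Definition arbitrage_first_kind : Prop :=
  exists (th0 : R) (th : 'I_n -> R),
    [/\ value0 th0 th <= 0,
        (\forall w \ae P, 0 <= value1 th0 th w) &
        (0 < P [set w | (0 < value1 th0 th w)%R])%E].

Definition arbitrage_second_kind : Prop :=
  exists (th0 : R) (th : 'I_n -> R),
    value0 th0 th < 0 /\ (\forall w \ae P, 0 <= value1 th0 th w).
End Market.

(* Main.v *)
Require Import Defs.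
From HB Require Import structures.
From mathcomp Require Import all_boot all_order all_algebra.
From mathcomp Require Import all_classical all_reals all_analysis.
From mathcomp Require Import ess_sup_inf.
From mathcomp Require Import ring lra.
Set Implicit Arguments. Unset Strict Implicit. Unset Printing Implicit Defensive.
Import Order.TTheory GRing.Theory Num.Theory.
Import numFieldNormedType.Exports.
Local Open Scope classical_set_scope.
Local Open Scope ring_scope.

Section Helpers.
Context {R : realType} {dT : measure_display} {T : measurableType dT}.
Variable (P : probability T R).
Variables (r : R) (n : nat) (S0 : 'I_n -> R) (S1 : 'I_n -> T -> R).
Hypothesis hint : forall i, P.-integrable setT (fun w => (ret S0 S1 i w)%:E).

Definition Ex (pi : 'I_n -> R) : R :=
  \sum_(i < n) pi i * (fine (expect P (ret S0 S1 i)) - r).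

Lemma excess_int pi : P.-integrable setT (EFin \o excess r S0 S1 pi) /\
  expect P (excess r S0 S1 pi) = (Ex pi)%:E.
Proof.
have hterm i : P.-integrable setT
    (fun w => (pi i)%:E * ((ret S0 S1 i w)%:E - r%:E))%E.
  apply: integrableZl; first exact: measurableT.
  exact: (integrableB measurableT (hint i)
            (finite_measure_integrable_cst P r measurableT)).
have eqf : EFin \o excess r S0 S1 pi =
    (fun w => \sum_(i < n) (pi i)%:E * ((ret S0 S1 i w)%:E - r%:E))%E.
  apply/funext => w; rewrite /= /excess -sumEFin; apply: eq_bigr => i _.
  by rewrite EFinM EFinB.
split; first by rewrite eqf; apply: (integrable_sum measurableT) => i _; exact: hterm.
rewrite /expect.
transitivity (\int[P]_w (\sum_(i < n) (pi i)%:E * ((ret S0 S1 i w)%:E - r%:E)))%E.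
  by rewrite -eqf.
rewrite (integral_sum measurableT hterm); rewrite /Ex -sumEFin; apply: eq_bigr => i _.
rewrite (integralZl measurableT); last first.
  exact: (integrableB measurableT (hint i)
            (finite_measure_integrable_cst P r measurableT)).
rewrite (integralB_EFin measurableT (hint i) (finite_measure_integrable_cst P r measurableT)).
have -> : (\int[P]_(x in setT) (cst r x)%:E = r%:E)%E.
  rewrite (integral_cst P measurableT r%:E) -[RHS]mule1.
  congr (_ * _)%E; exact: probability_setT.
rewrite EFinM EFinB /expect fineK //.
exact: integrable_fin_num (hint i).
Qed.


Lemma excess_meas pi : measurable_fun setT (excess r S0 S1 pi).
Proof. exact/(measurable_realfun.measurable_EFinP _ _).1/(measurable_int P (excess_int pi).1). Qed.

Lemma aeF : ~ (\forall w \ae P, False).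
Proof.
case=> N [mN PN0 sub].
have : P setT = 0%E.
  by apply: (subset_measure0 measurableT mN) => // w _; apply: sub.
by rewrite probability_setT => /eqP; rewrite onee_eq0.
Qed.

Lemma Ex_abs pi : (\forall w \ae P, 0 <= excess r S0 S1 pi w) ->
  expect P (excess r S0 S1 pi) = (\int[P]_w `|(excess r S0 S1 pi w)%:E|)%E.
Proof.
move=> h; rewrite /expect.
apply: (ae_eq_integral (abse \o (EFin \o excess r S0 S1 pi))) => //.
- exact: (measurable_int P (excess_int pi).1).
- have Hm := measurableT_comp (@measurable_realfun.normr_measurable R setT)
    (excess_meas pi).
  have Hm2 := (measurable_realfun.measurable_EFinP _ _).2 Hm.
  exact: Hm2.
- by apply: filterS h => w h _ /=; rewrite ger0_norm.
Qed.

Lemma Ex_ge0 pi : (\forall w \ae P, 0 <= excess r S0 S1 pi w) -> 0 <= Ex pi.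
Proof.
move=> h; rewrite -lee_fin -(excess_int pi).2 Ex_abs //.
by apply: integral_ge0 => w _; exact: abse_ge0.
Qed.

Lemma Ex_eq0 pi : (\forall w \ae P, 0 <= excess r S0 S1 pi w) -> Ex pi = 0 ->
  \forall w \ae P, excess r S0 S1 pi w = 0.
Proof.
move=> h E0.
have := (ae_eq_integral_abs P measurableT (measurable_int P (excess_int pi).1)).1.
rewrite -Ex_abs // (excess_int pi).2 E0 => /(_ erefl) h2.
by apply: filterS h2 => w /(_ I) /= [].
Qed.


Lemma excessD pi pi' w : excess r S0 S1 (fun i => pi i + pi' i) w =
  excess r S0 S1 pi w + excess r S0 S1 pi' w.
Proof. by rewrite /excess -big_split; apply: eq_bigr => i _; rewrite mulrDl. Qed.

Lemma excessZ c pi w : excess r S0 S1 (fun i => c * pi i) w =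
  c * excess r S0 S1 pi w.
Proof. by rewrite /excess mulr_sumr; apply: eq_bigr => i _; rewrite mulrA. Qed.

Lemma excess0 w : excess r S0 S1 (fun _ => 0) w = 0.
Proof. by rewrite /excess big1 // => i _; rewrite mul0r. Qed.

Lemma ExD pi pi' : Ex (fun i => pi i + pi' i) = Ex pi + Ex pi'.
Proof. by rewrite /Ex -big_split; apply: eq_bigr => i _; rewrite mulrDl. Qed.

Lemma ExZ c pi : Ex (fun i => c * pi i) = c * Ex pi.
Proof. by rewrite /Ex mulr_sumr; apply: eq_bigr => i _; rewrite mulrA. Qed.

Lemma Ex0 : Ex (fun _ => 0) = 0.
Proof. by rewrite /Ex big1 // => i _; rewrite mul0r. Qed.

Hypothesis hS0 : forall i, 0 < S0 i.

Lemma value1E th0 th w : value1 r S1 th0 th w =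
  excess r S0 S1 (fun i => th i * S0 i) w + (1 + r) * value0 S0 th0 th.
Proof.
rewrite /value1 /value0 /excess.
have -> : \sum_(i < n) th i * S0 i * (ret S0 S1 i w - r) =
    \sum_(i < n) th i * S1 i w - (1 + r) * \sum_(i < n) th i * S0 i.
  rewrite mulr_sumr -sumrB; apply: eq_bigr => i _; rewrite /ret.
  by field; rewrite gt_eqF.
ring.
Qed.

Lemma pi_th pi : (fun i => pi i / S0 i * S0 i) = pi.
Proof. by apply/funext => i; rewrite divfK // gt_eqF. Qed.

Lemma value1_meas th0 th : measurable_fun setT (value1 r S1 th0 th).
Proof.
have -> : value1 r S1 th0 th = (fun w => excess r S0 S1 (fun i => th i * S0 i) w
    + (1 + r) * value0 S0 th0 th).
  by apply/funext => w; exact: value1E.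
apply: measurable_realfun.measurable_funD => //; exact: excess_meas.
Qed.

Lemma posset (V : T -> R) : measurable_fun setT V ->
  (P [set w | (0 < V w)%R] = 0)%E <-> (\forall w \ae P, V w <= 0).
Proof.
move=> mV.
have -> : [set w | (0 < V w)%R] = (EFin \o V) @^-1` `]0%E, +oo[.
  by apply/seteqP; split => w /=; rewrite in_itv /= andbT lte_fin.
rewrite -ae_le_measureP; last exact/measurable_realfun.measurable_EFinP.
by split; apply: filterS => w /=; rewrite lee_fin.
Qed.

End Helpers.

Section WCl.
Context {R : realType} {dT : measure_display} {T : measurableType dT}.
Variable (P : probability T R).

Lemma WC_notNy (X : T -> R) : WC P X != -oo%E.
Proof.
apply/negP => /eqP /ess_sup_eqNyP h; apply: (aeF (P := P)).
by apply: filterS h.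
Qed.

Lemma WC_lt (X : T -> R) c : (WC P X < c%:E)%E ->
  exists w, w < c /\ \forall t \ae P, - X t <= w.
Proof.
have h := ess_sup_ge P (fun w => (- X w)%:E).
have := WC_notNy X; rewrite /WC in h *.
case: (ess_sup P _) h => [w| |] h //= _.
  rewrite lte_fin => wc; exists w; split => //; apply: filterS h => t;
  by rewrite lee_fin.
Qed.

Lemma WC_le (X : T -> R) c : (WC P X <= c%:E)%E ->
  \forall t \ae P, - X t <= c.
Proof. by move/ess_supP; apply: filterS => t; rewrite lee_fin. Qed.

Lemma WC_ub (X : T -> R) c : (\forall t \ae P, - X t <= c) -> (WC P X <= c%:E)%E.
Proof. by move=> h; apply/ess_supP; apply: filterS h => t; rewrite lee_fin. Qed.

Lemma WC_mono (X Y : T -> R) : (\forall t \ae P, X t <= Y t) -> (WC P Y <= WC P X)%E.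
Proof.
by move=> h; apply: le_ess_sup; apply: filterS h => t; rewrite lee_fin lerN2.
Qed.

Lemma WC0 : WC P (fun _ => 0) = 0%E.
Proof.
rewrite /WC (_ : (fun _ => _) = cst 0%E); last by apply/funext => w; rewrite oppr0.
apply: ess_sup_cst.
have H1 := probability_setT P.
by apply: (@eq_ind _ 1%E (fun x => (0 < x)%E) lte01); symmetry; exact: H1.
Qed.
End WCl.
Theorem proposition3p22 (R : realType) (dT : measure_display) (T : measurableType dT)
  (P : probability T R) (r : R) (n : nat) (S0 : 'I_n -> R) (S1 : 'I_n -> T -> R) :
  market_assumptions P r S0 S1 ->
  (rho_arbitrage P r S0 S1 (WC P) <-> arbitrage_first_kind P r S0 S1) /\
  (strong_rho_arbitrage P r S0 S1 (WC P) <-> arbitrage_second_kind P r S0 S1).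
Proof.
case=> [[r1 hS0] hS1 _ hint _].
have EE pi : expect P (excess r S0 S1 pi) = (Ex P r S0 S1 pi)%:E.
  exact: (excess_int r hint pi).2.
have WCz : WC P (excess r S0 S1 (fun _ => 0)) = 0%E.
  rewrite (_ : excess r S0 S1 (fun _ => 0) = fun _ => 0) ?WC0 //.
  by apply/funext => w; exact: excess0.
have r1' : 0 < 1 + r by lra.
split; split.
-
  move=> harb; apply: contrapT => nAFK; apply: harb; exists (fun _ => 0); split.
    by rewrite EE Ex0.
  case=> pi' [h1 h2 h3].
  rewrite WCz in h2.
  have hge : \forall w \ae P, 0 <= excess r S0 S1 pi' w.
    by apply: filterS (WC_le h2) => w; rewrite oppr_le0.
  pose th := fun i => pi' i / S0 i.
  pose th0 := - \sum_(i < n) th i * S0 i.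
  have v0 : value0 S0 th0 th = 0 by rewrite /value0 /th0; ring.
  have v1 w : value1 r S1 th0 th w = excess r S0 S1 pi' w.
    by rewrite (value1E r S1 hS0) v0 pi_th // mulr0 addr0.
  have hP : P [set w | (0 < value1 r S1 th0 th w)%R] = 0%E.
    apply/eqP; rewrite eq_le measure_ge0 andbT leNgt; apply/negP => hp.
    by apply: nAFK; exists th0, th; split => //; [rewrite v0|apply: filterS hge => w; rewrite v1].
  have hle : \forall w \ae P, excess r S0 S1 pi' w <= 0.
    have := (posset P (value1_meas r hint hS0 th0 th)).1 hP.
    by apply: filterS => w; rewrite v1.
  case: h3 => [h3|h3].
    rewrite !EE Ex0 lte_fin in h3.
    have H : 0 <= Ex P r S0 S1 (fun i => -1 * pi' i).
      apply: (Ex_ge0 hint); apply: filterS hle => w; rewrite excessZ; lra.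
    rewrite ExZ in H; lra.
  rewrite WCz in h3; have [w [w0 hw]] := WC_lt h3.
  apply: (aeF (P := P)); apply: filterS2 hw hle => t a b; lra.
-
  case=> th0 [th [hv0 hv1 hpos]] [pi [hE hnot]]; apply: hnot.
  pose pa := fun i => th i * S0 i.
  have Xa w : excess r S0 S1 pa w =
      value1 r S1 th0 th w - (1 + r) * value0 S0 th0 th.
    by rewrite (value1E r S1 hS0); ring.
  have hXa : \forall w \ae P, 0 <= excess r S0 S1 pa w.
    apply: filterS hv1 => w h; rewrite Xa.
    have : (1 + r) * value0 S0 th0 th <= 0 by rewrite pmulr_rle0.
    lra.
  have Epa : 0 < Ex P r S0 S1 pa.
    rewrite lt0r (Ex_ge0 hint hXa) andbT; apply/eqP => E0.
    have := Ex_eq0 hint hXa E0 => hz.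
    have hle : \forall w \ae P, value1 r S1 th0 th w <= 0.
      apply: filterS hz => w; rewrite Xa => h.
      have : (1 + r) * value0 S0 th0 th <= 0 by rewrite pmulr_rle0.
      lra.
    have := (posset P (value1_meas r hint hS0 th0 th)).2 hle.
    by move=> h0; move: hpos; rewrite h0 ltxx.
  exists (fun i => pi i + pa i).
  have hlt : (expect P (excess r S0 S1 pi) <
      expect P (excess r S0 S1 (fun i => (pi i + pa i)%R)))%E.
    by rewrite !EE ExD lte_fin; lra.
  split; [exact: ltW | | by left].
  rewrite (_ : excess r S0 S1 (fun i => pi i + pa i) =
     fun w => excess r S0 S1 pi w + excess r S0 S1 pa w); last first.
    by apply/funext => w; exact: excessD.
  apply: WC_mono; apply: filterS hXa => w h; lra.
-
  move=> hs; have [pi' [h1 h2]] := hs (fun _ => 0).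
  rewrite WCz in h2; have [w [w0 hw]] := WC_lt h2.
  pose th := fun i => pi' i / S0 i.
  pose c := w / (1 + r).
  pose th0 := - \sum_(i < n) th i * S0 i + c.
  have v0 : value0 S0 th0 th = c by rewrite /value0 /th0; ring.
  have v1 t : value1 r S1 th0 th t = excess r S0 S1 pi' t + w.
    rewrite (value1E r S1 hS0) v0 pi_th // /c; congr (_ + _).
    by field; rewrite gt_eqF.
  exists th0, th; split.
    by rewrite v0 /c ltr_pdivrMr // mul0r.
  by apply: filterS hw => t h; rewrite v1; lra.
-
  case=> th0 [th [hv0 hv1]] pi.
  pose pa := fun i => th i * S0 i.
  have Xa w : excess r S0 S1 pa w =
      value1 r S1 th0 th w - (1 + r) * value0 S0 th0 th.
    by rewrite (value1E r S1 hS0); ring.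
  pose eps := - ((1 + r) * value0 S0 th0 th).
  have eps0 : 0 < eps by rewrite /eps oppr_gt0 pmulr_rlt0.
  have hXe : \forall w \ae P, eps <= excess r S0 S1 pa w.
    by apply: filterS hv1 => w h; rewrite Xa /eps; lra.
  have hXa : \forall w \ae P, 0 <= excess r S0 S1 pa w.
    by apply: filterS hXe => w h; lra.
  have Epa : 0 < Ex P r S0 S1 pa.
    rewrite lt0r (Ex_ge0 hint hXa) andbT; apply/eqP => E0.
    have hz := Ex_eq0 hint hXa E0.
    by apply: (aeF (P := P)); apply: filterS2 hz hXe => t a b; lra.
  set a := Ex P r S0 S1 pa.
  set b := Ex P r S0 S1 pi.
  set W := WC P (excess r S0 S1 pi).
  pose l1 := (`|b| + 1) / a.
  pose l2 := (`|fine W| + 1) / eps.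
  have l1a : l1 * a = `|b| + 1 by rewrite /l1 divfK // gt_eqF.
  have l2e : l2 * eps = `|fine W| + 1 by rewrite /l2 divfK // gt_eqF.
  have l1p : 0 < l1 by rewrite /l1 divr_gt0 // ltr_wpDl.
  have l2p : 0 < l2 by rewrite /l2 divr_gt0 // ltr_wpDl.
  have hb : b <= `|b| by exact: ler_norm.
  have hw : - fine W <= `|fine W| by rewrite -normrN ler_norm.
  exists (fun i => (l1 + l2) * pa i); split.
    rewrite !EE ExZ lte_fin -/a -/b.
    have : 0 < l2 * a by exact: mulr_gt0.
    lra.
  rewrite (_ : excess r S0 S1 (fun i => (l1 + l2) * pa i) =
     fun w => (l1 + l2) * excess r S0 S1 pa w); last first.
    by apply/funext => w; exact: excessZ.
  apply: (@le_lt_trans _ _ (- ((l1 + l2) * eps))%:E).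
    apply: WC_ub; apply: filterS hXe => t h.
    rewrite lerN2; apply: ler_wpM2l => //; lra.
  have nW := WC_notNy P (excess r S0 S1 pi); rewrite -/W in nW.
  clearbody l2 W; move: hw l2e nW.
  case: W => [w| |] hw l2e //= _; last by rewrite ltry.
  rewrite lte_fin.
  have : 0 < l1 * eps by exact: mulr_gt0.
  rewrite /= in hw l2e; lra.
Qed.
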